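(* Let $k\in\{-1,0,1\}$, $R_b>0$ (with $R_b<1$ if $k=1$), $\beta>0$, $\varepsilon\in\{1,-1\}$, and let $a>0$, $\phi$ be functions of $t$ with $\dot\phi=-3\beta/a^3$. Let $m(t,R)$ satisfy $m(t,R)=m(0,R)+\frac{R^3}{2}\beta t$. Let $t=t(w)$ be a function with $\dot t(w)=\frac{dt}{dw}>0$, set $r_\Sigma(w)=a(t(w))R_b$, $M(w)=m(t(w),R_b)$, $\Lambda(w)=\phi(t(w))$, and consider the Vaidya type metric \[ g_{\mathrm{ext}}=-\Big(1-\frac{2M(w)}{r}-\frac{\Lambda(w)}{3}r^2\Big)dw^2+2\varepsilon\,dw\,dr+r^2d\Omega^2,\qquad r\ge r_\Sigma(w), \] whose energy density (solving $R_{\mu\nu}-\frac12g_{\mu\nu}\mathcal R+\Lambda(w)g_{\mu\nu}=\tilde\rho\, dw^2$) is \[ \tilde\rho(w,r)=\frac{\varepsilon}{r^2}\Big(2\frac{dM}{dw}+\frac{r^3}{3}\frac{d\Lambda}{dw}\Big). \] Then $\tilde\rho(w,r_\Sigma(w))=0$, and the weak energy condition $\tilde\rho(w,r)>0$ for all $r>r_\Sigma(w)$ holds if and only if $\varepsilon=-1$ (the outgoing Vaidya metric).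
   Context: $d\Omega^2=d\theta^2+\sin^2\theta\,d\psi^2$. $w$ is an advanced null coordinate for $\varepsilon=1$ and a retarded one for $\varepsilon=-1$. *)

(* Defs.v *)
From Stdlib Require Import Reals Lra.
From Coquelicot Require Import Coquelicot.
Open Scope R_scope.

Definition Mext (m : R -> R -> R) (tw : R -> R) (Rb : R) (w : R) : R :=
  m (tw w) Rb.
Definition Lambdaext (phi : R -> R) (tw : R -> R) (w : R) : R := phi (tw w).
Definition rSigma (a : R -> R) (tw : R -> R) (Rb : R) (w : R) : R :=
  a (tw w) * Rb.

Definition rho_tilde (eps : R) (M Lam : R -> R) (w r : R) : R :=
  eps / r ^ 2 * (2 * Derive M w + r ^ 3 / 3 * Derive Lam w).

(* Main.v *)
Require Import Defs.
From Stdlib Require Import Reals ZArith Lra Lia.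
From Coquelicot Require Import Coquelicot.
Open Scope R_scope.

Lemma key (Rb beta eps : R) (a phi tw : R -> R) (m : R -> R -> R)
  (ha : forall t, 0 < a t)
  (hphi : forall t, is_derive phi t (- 3 * beta / (a t) ^ 3))
  (hm : forall t Rr, m t Rr = m 0 Rr + Rr ^ 3 / 2 * beta * t)
  (htw : forall w, ex_derive tw w /\ 0 < Derive tw w) w r :
  rho_tilde eps (Mext m tw Rb) (Lambdaext phi tw) w r =
  eps / r ^ 2 * (beta * Derive tw w / (a (tw w))^3 * ((a (tw w) * Rb)^3 - r^3)).
Proof.
  unfold rho_tilde.
  destruct (htw w) as [hd hp].
  assert (HM : Derive (Mext m tw Rb) w = Rb ^ 3 / 2 * beta * Derive tw w).
  { apply is_derive_unique.
    apply is_derive_ext with (f := fun w => m 0 Rb + Rb ^ 3 / 2 * beta * tw w).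
    { intro t; unfold Mext; now rewrite (hm (tw t) Rb). }
    auto_derive. exact hd. replace (Derive (fun x : R => tw x) w) with (Derive tw w) by reflexivity. simpl; field. }
  assert (HL : Derive (Lambdaext phi tw) w = Derive tw w * (- 3 * beta / (a (tw w)) ^ 3)).
  { apply is_derive_unique. unfold Lambdaext.
    apply (is_derive_comp phi tw). apply hphi. apply Derive_correct; auto. }
  rewrite HM, HL. f_equal. pose proof (ha (tw w)). field. lra.
Qed.

Theorem mainTheorem3
  (k : Z) (Rb beta eps : R) (a phi tw : R -> R) (m : R -> R -> R)
  (hk : k = (-1)%Z \/ k = 0%Z \/ k = 1%Z)
  (hRb : 0 < Rb) (hRb1 : k = 1%Z -> Rb < 1)
  (hbeta : 0 < beta)
  (heps : eps = 1 \/ eps = -1)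
  (ha : forall t, 0 < a t)
  (hphi : forall t, is_derive phi t (- 3 * beta / (a t) ^ 3))
  (hm : forall t Rr, m t Rr = m 0 Rr + Rr ^ 3 / 2 * beta * t)
  (htw : forall w, ex_derive tw w /\ 0 < Derive tw w) :
  (forall w,
     rho_tilde eps (Mext m tw Rb) (Lambdaext phi tw) w (rSigma a tw Rb w) = 0)
  /\
  ((forall w r, r > rSigma a tw Rb w ->
      rho_tilde eps (Mext m tw Rb) (Lambdaext phi tw) w r > 0)
   <-> eps = -1).
Proof.
  split.
  - intro w. rewrite (key Rb beta eps a phi tw m ha hphi hm htw). unfold rSigma. ring.
  - assert (Hneg : forall w r, r > rSigma a tw Rb w ->
      0 < / r ^ 2 * (beta * Derive tw w / (a (tw w))^3 * (r^3 - (a (tw w) * Rb)^3))).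
    { intros w r hr. unfold rSigma in hr. pose proof (ha (tw w)) as h1.
      destruct (htw w) as [_ hp].
      set (s := a (tw w) * Rb) in *.
      assert (0 < s) by (unfold s; nra).
      assert (s^3 < r^3) by (simpl; assert (s*s < r*r) by nra; nra).
      apply Rmult_lt_0_compat. apply Rinv_0_lt_compat. apply pow_lt; lra.
      apply Rmult_lt_0_compat; [|lra].
      unfold Rdiv. apply Rmult_lt_0_compat. nra. apply Rinv_0_lt_compat; apply pow_lt; lra. }
    split.
    + intro H. destruct heps as [e|e]; auto. exfalso.
      set (w := 0). set (r := rSigma a tw Rb w + 1).
      specialize (H w r ltac:(unfold r; lra)). specialize (Hneg w r ltac:(unfold r; lra)).
      rewrite (key Rb beta eps a phi tw m ha hphi hm htw) in H. rewrite e in H.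
      revert H Hneg. set (X := beta * Derive tw w / a (tw w) ^ 3).
      intros H Hn. unfold Rdiv in H. nra.
    + intros e w r hr. specialize (Hneg w r hr).
      rewrite (key Rb beta eps a phi tw m ha hphi hm htw), e.
      revert Hneg. set (X := beta * Derive tw w / a (tw w) ^ 3).
      intros Hn. unfold Rdiv. nra.
Qed.
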